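(* Every $L\in\mathcal L(C_6)$ which is an arithmetical multiprogression with difference $4$ and period $\{0,1,4\}$ lies in $\mathcal L(C_2^5)$.
   Context: $C_n$ denotes a cyclic group of order $n$ and $C_2^r$ an elementary abelian $2$-group of rank $r$; $[a,b]=\{x\in\mathbb Z:a\le x\le b\}$. For a subset $G_0$ of a finite abelian group $G$, a sequence over $G_0$ is an element of the free abelian monoid $\mathcal F(G_0)$ with basis $G_0$ (a finite unordered list of elements of $G_0$, repetitions allowed). $\mathcal B(G_0)$ is the monoid of zero-sum sequences over $G_0$ (including the empty sequence). An atom is a minimal zero-sum sequence, i.e. a nonempty zero-sum sequence that is not a product of two nonempty zero-sum sequences. For $B\in\mathcal B(G_0)$, $\mathsf L(B)=\{k\in\mathbb N_0: B \text{ is a product of } k \text{ atoms}\}$, and $\mathcal L(G_0)=\{\mathsf L(B):B\in\mathcal B(G_0)\}$; $\mathcal L(G)$ is the case $G_0=G$. Arithmetical multiprogression (AMP): for $d\in\mathbb N$ and $\{0,d\}\subset\mathcal D\subset[0,d]$, a set $L\subset\mathbb Z$ is an AMP with difference $d$ and period $\mathcal D$ if $L$ is finite, nonempty, and $L=(\min L+\mathcal D+d\mathbb Z)\cap[\min L,\max L]$. *)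

(* Defs.v *)
From HB Require Import structures.
From mathcomp Require Import all_boot all_order all_algebra.
Set Implicit Arguments. Unset Strict Implicit. Unset Printing Implicit Defensive.
Import GRing.Theory.
Local Open Scope ring_scope.

(* Sequences over a finite abelian group G (written additively): elements of
   the free abelian monoid F(G), represented by multiplicity functions. *)
Definition fseq (G : finZmodType) := {ffun G -> nat}.

Definition seq_mul (G : finZmodType) (S T : fseq G) : fseq G :=
  [ffun g => (S g + T g)%N].

Definition seq_prod (G : finZmodType) (s : seq (fseq G)) : fseq G :=
  [ffun g => (\sum_(A <- s) A g)%N].

Definition seq_len (G : finZmodType) (S : fseq G) : nat := (\sum_(g : G) S g)%N.

Definition zero_sum (G : finZmodType) (S : fseq G) : Prop :=
  \sum_(g : G) g *+ S g = 0.

Definition atom (G : finZmodType) (A : fseq G) : Prop :=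
  zero_sum A /\ (0 < seq_len A)%N /\
  ~ (exists U V : fseq G, [/\ zero_sum U, zero_sum V, (0 < seq_len U)%N,
       (0 < seq_len V)%N & A = seq_mul U V]).

Definition in_lengths (G : finZmodType) (B : fseq G) (k : nat) : Prop :=
  exists s : seq (fseq G), [/\ size s = k, (forall A, A \in s -> atom A) &
                               B = seq_prod s].

Definition in_system_of_sets (G : finZmodType) (L : nat -> Prop) : Prop :=
  exists B : fseq G, zero_sum B /\ forall k, L k <-> in_lengths B k.

(* L is an AMP with difference d and period D
   (d \in N, {0,d} \subset D \subset [0,d]); L finite nonempty with min m and
   max M, and L = (m + D + dZ) \cap [m, M]. For naturals x >= m,
   x \in m + delta + dZ iff x = m + delta (mod d). *)
Definition is_AMP (d : nat) (D : pred nat) (L : nat -> Prop) : Prop :=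
  [/\ (0 < d)%N, 0%N \in D, d \in D, (forall x, x \in D -> x <= d)%N &
   exists m M : nat,
     [/\ L m, L M, (forall x, L x -> m <= x <= M)%N &
       forall x, L x <-> ((m <= x <= M)%N /\
                          exists2 delta, delta \in D & x = (m + delta)%N %[mod d])]].

(* Main.v *)
Require Import Defs.
From HB Require Import structures.
From mathcomp Require Import all_boot all_order all_algebra.
From mathcomp Require Import zify.
Set Implicit Arguments. Unset Strict Implicit. Unset Printing Implicit Defensive.
Import GRing.Theory.


Section Gen.
Variable G : finZmodType.

Lemma seq_prodE (s : seq (fseq G)) g : seq_prod s g = (\sum_(A <- s) A g)%N.
Proof. by rewrite ffunE. Qed.

Lemma seq_mulE (U V : fseq G) g : seq_mul U V g = (U g + V g)%N.
Proof. by rewrite ffunE. Qed.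

Lemma sigma_mul (U V : fseq G) :
  (\sum_(g : G) g *+ seq_mul U V g = \sum_(g : G) g *+ U g + \sum_(g : G) g *+ V g)%R.
Proof. rewrite -big_split /=; apply: eq_bigr => g _; by rewrite ffunE mulrnDr. Qed.

Lemma zero_sum_mulr (U V : fseq G) :
  zero_sum U -> zero_sum (seq_mul U V) -> zero_sum V.
Proof. rewrite /zero_sum sigma_mul => ->; by rewrite add0r. Qed.

Lemma len_mul (U V : fseq G) : seq_len (seq_mul U V) = (seq_len U + seq_len V)%N.
Proof. rewrite /seq_len -big_split /=; apply: eq_bigr => g _; by rewrite ffunE. Qed.

Lemma atom_sub (A U : fseq G) : atom A -> (forall g, U g <= A g)%N -> zero_sum U ->
  (0 < seq_len U)%N -> (seq_len U < seq_len A)%N -> False.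
Proof.
move=> [zA [lA nd]] UA zU lU lUA; apply: nd.
pose V := [ffun g => (A g - U g)%N].
have eA : A = seq_mul U V by apply/ffunP => g; rewrite !ffunE subnKC.
exists U, V; split => //.
  by apply: zero_sum_mulr zU _; rewrite -eA.
by move: lUA; rewrite eA len_mul; lia.
Qed.

Lemma len_zero_atom (A : fseq G) : atom A -> (0 < seq_len A)%N.
Proof. by case=> _ []. Qed.

Lemma prod_ge (s : seq (fseq G)) A g : A \in s -> (A g <= seq_prod s g)%N.
Proof.
rewrite seq_prodE; elim: s => [//|B s IH]; rewrite inE big_cons => /orP[/eqP->|/IH].
  by apply: leq_addr.
move=> h; apply: leq_trans h _; apply: leq_addl.
Qed.

Lemma sum_by_idx (T : eqType) (s : seq T) (idx : T -> nat) N (F : nat -> nat) :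
  (forall A, A \in s -> idx A < N)%N ->
  (\sum_(A <- s) F (idx A) = \sum_(i < N) count (fun A => idx A == i) s * F i)%N.
Proof.
elim: s => [|A s IH] H.
  by rewrite big_nil big1 // => i _.
rewrite big_cons IH; last by move=> B hB; apply: H; rewrite inE hB orbT.
have hA : (idx A < N)%N by apply: H; rewrite inE eqxx.
have -> : (\sum_(i < N) count (fun B => idx B == i) (A :: s) * F i =
   \sum_(i < N) (idx A == i) * F i + \sum_(i < N) count (fun B => idx B == i) s * F i)%N.
  by rewrite -big_split /=; apply: eq_bigr => i _; rewrite mulnDl.
congr (_ + _)%N.
rewrite (bigD1 (Ordinal hA)) //= eqxx mul1n big1 ?addn0 // => i hi.
have -> : (idx A == i) = false.
  apply/negbTE; apply: contra hi => /eqP e; apply/eqP; apply: val_inj => /=; by rewrite e.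
by [].
Qed.

Variable X : seq G.
Hypothesis HX : uniq X.

Definition mk (c : seq nat) : fseq G :=
  [ffun g => \sum_(j < size X) (g == nth 0%R X j) * nth 0 c j]%N.

Lemma mk_nth c j : (j < size X)%N -> mk c (nth 0%R X j) = nth 0 c j.
Proof.
move=> hj; rewrite ffunE (bigD1 (Ordinal hj)) //= eqxx mul1n big1 ?addn0 //.
move=> i hi; rewrite nth_uniq //.
have -> : (j == i) = false.
  apply/negbTE; apply: contra hi => /eqP e; apply/eqP; apply: val_inj => /=; by rewrite e.
by [].
Qed.

Lemma mk_out c g : g \notin X -> mk c g = 0%N.
Proof.
move=> hg; rewrite ffunE big1 // => i _.
have -> : (g == nth 0%R X i) = false.
  by apply/negbTE; apply: contra hg => /eqP ->; apply: mem_nth.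
by [].
Qed.

Lemma sigma_mk c : (\sum_(g : G) g *+ mk c g = \sum_(j < size X) nth 0%R X j *+ nth 0 c j)%R.
Proof.
under eq_bigr do rewrite ffunE -sumrMnr.
rewrite exchange_big /=; apply: eq_bigr => j _.
rewrite (bigD1 (nth 0%R X j)) //= eqxx mul1n big1 ?addr0 // => g hg.
by rewrite (negbTE hg) mul0n mulr0n.
Qed.

Lemma zs_mk c : zero_sum (mk c) <-> (\sum_(j < size X) nth 0%R X j *+ nth 0 c j = 0)%R.
Proof. by rewrite /zero_sum sigma_mk. Qed.

Lemma len_mk c : seq_len (mk c) = (\sum_(j < size X) nth 0 c j)%N.
Proof.
rewrite /seq_len; under eq_bigr do rewrite ffunE.
rewrite exchange_big /=; apply: eq_bigr => j _.
rewrite (bigD1 (nth 0%R X j)) //= eqxx mul1n big1 ?addn0 // => g hg.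
by rewrite (negbTE hg).
Qed.

Definition vec (A : fseq G) : seq nat := [seq A x | x <- X].

Lemma size_vec (A : fseq G) : size (vec A) = size X.
Proof. by rewrite size_map. Qed.

Lemma vec_nth (A : fseq G) j : (j < size X)%N -> nth 0 (vec A) j = A (nth 0%R X j).
Proof. by move=> hj; rewrite (nth_map 0%R). Qed.

Lemma mk_vec (A : fseq G) : (forall g, g \notin X -> A g = 0%N) -> mk (vec A) = A.
Proof.
move=> hA; apply/ffunP => g; case: (boolP (g \in X)) => hg.
  by rewrite -(nth_index 0%R hg) mk_nth ?index_mem // vec_nth ?index_mem.
by rewrite mk_out // hA.
Qed.

Lemma sumn_nth (c : seq nat) : size c = size X -> sumn c = (\sum_(j < size X) nth 0 c j)%N.
Proof.
move=> hc; rewrite sumnE (big_nth 0) big_mkord hc; by [].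
Qed.

Lemma prod_map_mk (vs : seq (seq nat)) :
  seq_prod [seq mk c | c <- vs] =
  mk [seq sumn [seq nth 0 a j | a <- vs] | j <- iota 0 (size X)].
Proof.
apply/ffunP => g; rewrite seq_prodE big_map ffunE.
under eq_bigr do rewrite ffunE.
rewrite exchange_big /=; apply: eq_bigr => j _.
rewrite (nth_map 0) ?size_iota // nth_iota // add0n sumnE big_map.
by rewrite big_distrr.
Qed.

End Gen.


Fixpoint boxes (bs : seq nat) : seq (seq nat) :=
  match bs with
  | [::] => [:: [::]]
  | b :: bs' => [seq i :: w | i <- iota 0 b.+1, w <- boxes bs']
  end.

Lemma boxes_in bs v : size v = size bs ->
  (forall j, j < size bs -> nth 0 v j <= nth 0 bs j) -> v \in boxes bs.
Proof.
elim: bs v => [|b bs IH] [|x v] //= [hs] hj.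
have h1 : x \in iota 0 b.+1 by rewrite mem_iota /= add0n ltnS (hj 0).
have h2 : v \in boxes bs by apply: IH => // j hj'; apply: (hj j.+1).
exact: (allpairs_f (fun i w => i :: w) h1 h2).
Qed.

Lemma boxes_sub bs v : v \in boxes bs ->
  size v = size bs /\ (forall j, nth 0 v j <= nth 0 bs j).
Proof.
elim: bs v => [|b bs IH] v /=.
  by rewrite inE => /eqP ->; split => // j; rewrite nth_nil.
move=> hv0; have : v \in [seq i :: w | i <- iota 0 b.+1, w <- boxes bs] := hv0.
move/allpairsP => [[i w] [/= hi hw ->]].
have [hs hn] := IH _ hw.
split; first by rewrite /= hs.
case=> [|j] /=; last exact: hn.
by move: hi; rewrite (_ : 0 :: iota 1 b = iota 0 b.+1) // mem_iota add0n ltnS => /andP[].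
Qed.

Section Box.
Variable G : finZmodType.
Variable X : seq G.
Hypothesis HX : uniq X.
Variable zsb : seq nat -> bool.
Hypothesis Hzs : forall v, size v = size X -> zero_sum (mk X v) <-> zsb v.

Definition psubv v :=
  has (fun u => zsb u && (0 < sumn u) && (sumn u < sumn v)) (boxes v).
Definition chk (atl : seq (seq nat)) bs :=
  all (fun v => ~~ zsb v || (sumn v == 0) || (v \in atl) || psubv v) (boxes bs).
Definition okbs bs :=
  (size bs == size X) &&
  all (fun j => (0 < nth 0 bs j) && zsb (set_nth 0 (nseq (size X) 0) j (nth 0 bs j)))
      (iota 0 (size X)).

Lemma mk_le u v g : (forall j, nth 0 u j <= nth 0 v j) -> mk X u g <= mk X v g.
Proof.
move=> h; case: (boolP (g \in X)) => hg.
  by rewrite -(nth_index 0%R hg) !mk_nth ?index_mem.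
by rewrite !mk_out.
Qed.

Lemma sub_contra v u : atom (mk X v) -> size v = size X -> size u = size X ->
  (forall j, nth 0 u j <= nth 0 v j) -> zsb u -> 0 < sumn u -> sumn u < sumn v -> False.
Proof.
move=> hA hv hu hle zu h1 h2.
apply: (atom_sub hA (U := mk X u)).
- by move=> g; apply: mk_le.
- by apply/Hzs.
- by rewrite len_mk -sumn_nth.
- by rewrite !len_mk -!sumn_nth.
Qed.

Lemma sumn_set_nth n j x : j < n -> sumn (set_nth 0 (nseq n 0) j x) = x.
Proof.
elim: n j => [//|n IH] [|j] /= hj.
  by rewrite addnC; elim: n {IH hj} => //.
by rewrite IH.
Qed.

Lemma classify atl bs : chk atl bs -> okbs bs ->
  forall A : fseq G, atom A -> (forall g, g \notin X -> A g = 0) -> vec X A \in atl.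
Proof.
move=> hc /andP[/eqP hbs hok] A hA hout.
set v := vec X A.
have eA : mk X v = A by apply: mk_vec.
have hv : size v = size X by rewrite size_vec.
rewrite -eA in hA.
have hb : forall j, j < size X -> nth 0 v j <= nth 0 bs j.
  move=> j hj; rewrite leqNgt; apply/negP => hlt.
  move/allP: hok => /(_ j); rewrite mem_iota add0n hj => /(_ isT) /andP[hpos hz].
  apply: (sub_contra hA hv (u := set_nth 0 (nseq (size X) 0) j (nth 0 bs j))) hz _ _.
  - by rewrite size_set_nth size_nseq; apply/maxn_idPr.
  - move=> i; rewrite nth_set_nth /= nth_nseq; case: eqP => [->|_]; first exact: ltnW.
    by case: ifP.
  - by rewrite sumn_set_nth.
  - rewrite sumn_set_nth // (sumn_nth hv) (bigD1 (Ordinal hj)) //=.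
    apply: (leq_trans hlt); apply: leq_addr.
have hin : v \in boxes bs by apply: boxes_in; rewrite ?hv ?hbs // -hbs.
move/allP: hc => /(_ v hin) /orP[/orP[/orP[]|]|] //.
- by case: hA => /(Hzs hv) ->.
- move/eqP=> h0; case: hA => _ [] ; by rewrite len_mk -(sumn_nth hv) h0.
- case/hasP => u hu /andP[/andP[zu h1] h2].
  have [hsu hle] := boxes_sub hu.
  exfalso; apply: (sub_contra hA hv _ hle zu h1 h2); by rewrite hsu.
Qed.

Lemma atom_chk a : size a = size X -> zsb a -> 0 < sumn a -> ~~ psubv a -> atom (mk X a).
Proof.
move=> ha za pa np; split; first by apply/Hzs.
split; first by rewrite len_mk -sumn_nth.
case=> U [V [zU zV lU lV e]].
have hU : forall g, U g <= mk X a g by move=> g; rewrite e seq_mulE leq_addr.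
have hout : forall g, g \notin X -> U g = 0.
  by move=> g hg; apply/eqP; rewrite -leqn0 -(mk_out a hg) hU.
set u := vec X U.
have eU : mk X u = U by apply: mk_vec.
have hu : size u = size X by rewrite size_vec.
move/negP: np; apply; apply/hasP; exists u.
  apply: boxes_in; first by rewrite hu ha.
  by move=> j hj; rewrite vec_nth -?ha // -(mk_nth HX a) -?ha.
apply/andP; split; first (apply/andP; split).
- by apply/Hzs => //; rewrite eU.
- by rewrite (sumn_nth hu) -len_mk eU.
- have := f_equal (@seq_len G) e; rewrite len_mul len_mk -(sumn_nth ha) => ->.
  rewrite (sumn_nth hu) -len_mk eU; lia.
Qed.

Lemma fact_counts atl bs : chk atl bs -> okbs bs ->
  forall (B : fseq G) (s : seq (fseq G)), (forall g, g \notin X -> B g = 0) -> (forall A, A \in s -> atom A) ->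
  B = seq_prod s ->
  exists c : nat -> nat, size s = \sum_(i < size atl) c i /\
    forall j, j < size X -> B (nth 0%R X j) = \sum_(i < size atl) c i * nth 0 (nth [::] atl i) j.
Proof.
move=> hc hok B s hB hs eB.
have hin : forall A, A \in s -> vec X A \in atl.
  move=> A hA; apply: (classify hc hok); first exact: hs.
  move=> g hg; apply/eqP; rewrite -leqn0 -(hB g hg) eB; exact: prod_ge.
pose idx A := index (vec X A) atl.
have hidx : forall A, A \in s -> idx A < size atl by move=> A /hin; rewrite index_mem.
exists (fun i => count (fun A => idx A == i) s); split.
  rewrite -sum1_size (@sum_by_idx _ s idx (size atl) (fun _ => 1)) //.
  by apply: eq_bigr => i _; rewrite muln1.
move=> j hj; rewrite eB seq_prodE.
rewrite -(@sum_by_idx _ s idx (size atl) (fun i => nth 0 (nth [::] atl i) j)) //.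
apply: eq_big_seq => A hA.
by rewrite /idx nth_index ?hin // vec_nth.
Qed.

End Box.


Definition G6 := [the finZmodType of 'Z_6].
Definition X6 : seq G6 := [seq (i%:R : 'Z_6)%R | i <- iota 0 6].

Lemma size_X6 : size X6 = 6. Proof. by rewrite size_map size_iota. Qed.

Lemma nth_X6 j : j < 6 -> nth 0%R X6 j = (j%:R : 'Z_6)%R.
Proof. by move=> hj; rewrite (nth_map 0) ?size_iota // nth_iota. Qed.

Lemma uniq_X6 : uniq X6.
Proof.
apply: (@map_uniq _ _ (fun x : 'Z_6 => nat_of_ord x)).
have -> : [seq nat_of_ord x | x <- X6] = [seq i %% 6 | i <- iota 0 6].
  by rewrite -map_comp; apply: eq_map => i /=; rewrite val_Zp_nat.
by vm_compute.
Qed.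

Lemma in_X6 (g : G6) : g \in X6.
Proof.
apply/mapP; exists (nat_of_ord g); first by rewrite mem_iota add0n; case: g.
by rewrite natr_Zp.
Qed.

Definition zsb6 (v : seq nat) := sumn [seq i * nth 0 v i | i <- iota 0 6] %% 6 == 0.

Lemma Hzs6 v : size v = size X6 -> zero_sum (mk X6 v) <-> zsb6 v.
Proof.
move=> _; rewrite zs_mk.
have -> : (\sum_(j < size X6) nth 0%R X6 j *+ nth 0 v j =
           ((\sum_(j < size X6) j * nth 0 v j)%N%:R : 'Z_6))%R.
  rewrite natr_sum; apply: eq_bigr => j _.
  by rewrite nth_X6 -?size_X6 // natrM mulr_natr.
have e : forall N : nat, (N%:R : 'Z_6)%R = 0%R <-> N %% 6 = 0.
  move=> N; split => [h|h].
    by have := f_equal (@nat_of_ord _) h; rewrite val_Zp_nat.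
  by apply: val_inj; rewrite /= val_Zp_nat.
rewrite e /zsb6.
have -> : (\sum_(j < size X6) j * nth 0 v j)%N = sumn [seq i * nth 0 v i | i <- iota 0 6].
  rewrite sumnE big_map size_X6 -(big_mkord xpredT (fun j => j * nth 0 v j)).
  by [].
by split => [->|/eqP].
Qed.

Definition atl6 : seq (seq nat) :=
 [:: [::1;0;0;0;0;0]; [::0;0;0;0;0;6]; [::0;0;0;0;1;4]; [::0;0;0;0;2;2]; [::0;0;0;0;3;0];
     [::0;0;0;1;0;3]; [::0;0;0;1;1;1]; [::0;0;0;2;0;0]; [::0;0;1;0;0;2]; [::0;0;1;0;1;0];
     [::0;0;2;1;0;1]; [::0;0;3;0;0;0]; [::0;1;0;0;0;1]; [::0;1;0;1;2;0]; [::0;1;1;1;0;0];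
     [::0;2;0;0;1;0]; [::0;2;2;0;0;0]; [::0;3;0;1;0;0]; [::0;4;1;0;0;0]; [::0;6;0;0;0;0]].
Definition bs6 : seq nat := [:: 1;6;3;2;3;6].



Lemma chk6 : chk zsb6 atl6 bs6. Proof. by vm_compute. Qed.
Lemma okbs6 : okbs X6 zsb6 bs6. Proof. by rewrite /okbs size_X6; vm_compute. Qed.



Lemma counts6 (B : fseq G6) s : (forall A, A \in s -> atom A) -> B = seq_prod s ->
  exists c : nat -> nat, size s = \sum_(i < 20) c i /\
    forall j, j < 6 -> B (nth 0%R X6 j) = \sum_(i < 20) c i * nth 0 (nth [::] atl6 i) j.
Proof.
move=> hs eB.
have hB : forall g, g \notin X6 -> B g = 0 by move=> g; rewrite in_X6.
have [c [h1 h2]] := fact_counts uniq_X6 Hzs6 chk6 okbs6 hB hs eB.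
exists c; split => // j hj; apply: h2; by rewrite size_X6.
Qed.

Lemma sum_iota (c : nat -> nat) (F : nat -> nat) n :
  (\sum_(i < n) c i * F i = sumn [seq c i * F i | i <- iota 0 n])%N.
Proof. by rewrite sumnE big_map -(big_mkord xpredT (fun i => c i * F i)) /index_iota subn0. Qed.

Lemma sum_iota1 (c : nat -> nat) n :
  (\sum_(i < n) c i = sumn [seq c i | i <- iota 0 n])%N.
Proof. by rewrite sumnE big_map -(big_mkord xpredT (fun i => c i)) /index_iota subn0. Qed.

Lemma counts6' (B : fseq G6) s : (forall A, A \in s -> atom A) -> B = seq_prod s ->
  exists c : nat -> nat, size s = sumn [seq c i | i <- iota 0 20] /\
    forall j, j < 6 -> B (nth 0%R X6 j) = sumn [seq c i * nth 0 (nth [::] atl6 i) j | i <- iota 0 20].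
Proof.
move=> hs eB; have [c [h1 h2]] := counts6 hs eB; exists c; split.
  by rewrite h1 sum_iota1.
by move=> j hj; rewrite h2 // (sum_iota c (fun i => nth 0 (nth [::] atl6 i) j)).
Qed.

Lemma no_bad6 (B : fseq G6) s1 s2 s3 :
  (forall A, A \in s1 -> atom A) -> B = seq_prod s1 ->
  (forall A, A \in s2 -> atom A) -> B = seq_prod s2 ->
  (forall A, A \in s3 -> atom A) -> B = seq_prod s3 ->
  size s2 = (size s1).+1 -> 3 * size s1 <= (size s3).+1 -> 0 < size s1 -> False.
Proof.
move=> a1 e1 a2 e2 a3 e3.
have [c1 [l1 f1]] := counts6' a1 e1.
have [c2 [l2 f2]] := counts6' a2 e2.
have [c3 [l3 f3]] := counts6' a3 e3.
rewrite l1 l2 l3.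
have g0 := f1 0 isT; have g1 := f1 1 isT; have g2 := f1 2 isT;
have g3 := f1 3 isT; have g4 := f1 4 isT; have g5 := f1 5 isT.
have h0 := f2 0 isT; have h1 := f2 1 isT; have h2 := f2 2 isT;
have h3 := f2 3 isT; have h4 := f2 4 isT; have h5 := f2 5 isT.
have k0 := f3 0 isT; have k1 := f3 1 isT; have k2 := f3 2 isT;
have k3 := f3 3 isT; have k4 := f3 4 isT; have k5 := f3 5 isT.
clear f1 f2 f3 l1 l2 l3 a1 a2 a3 e1 e2 e3.
move: (B (nth 0%R X6 0)) (B (nth 0%R X6 1)) (B (nth 0%R X6 2)) (B (nth 0%R X6 3))
  (B (nth 0%R X6 4)) (B (nth 0%R X6 5)) g0 g1 g2 g3 g4 g5 h0 h1 h2 h3 h4 h5 k0 k1 k2 k3 k4 k5.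
move=> b0 b1 b2 b3 b4 b5.
simpl.
lia.
Qed.


Definition G2 := [the finZmodType of 'rV['Z_2]_5].
Definition elem (bs : seq nat) : G2 := (\row_(t < 5) ((nth 0 bs t)%:R : 'Z_2))%R.
Definition table : seq (seq nat) :=
  [:: [::0;0;0;0;0]; [::1;1;1;1;1]; [::1;0;0;0;0]; [::0;1;0;0;0];
      [::0;0;1;0;0]; [::0;0;0;1;0]; [::0;0;0;0;1]; [::1;1;0;0;0]].
Definition X2 : seq G2 := [seq elem bs | bs <- table].

Lemma size_X2 : size X2 = 8. Proof. by []. Qed.

Lemma elemE bs (t : 'I_5) : nat_of_ord ((elem bs) 0%R t) = nth 0 bs t %% 2.
Proof. by rewrite mxE val_Zp_nat. Qed.

Lemma uniq_X2 : uniq X2.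
Proof.
apply: (@map_uniq _ _ (fun x : 'rV['Z_2]_5 => [seq nat_of_ord (x 0%R (inord t)) | t <- iota 0 5])).
have -> : [seq [seq nat_of_ord (x 0%R (inord t)) | t <- iota 0 5] | x : 'rV['Z_2]_5 <- X2] =
          [seq [seq nth 0 bs t %% 2 | t <- iota 0 5] | bs <- table].
  by rewrite -map_comp; apply: eq_map => bs /=; rewrite !elemE !inordK.
by vm_compute.
Qed.

Definition zsb2 (v : seq nat) :=
  all (fun t => ~~ odd (sumn [seq nth 0 (nth [::] table j) t * nth 0 v j | j <- iota 0 8]))
      (iota 0 5).

Lemma sum_iota2 (c : nat -> nat) (F : nat -> nat) n :
  (\sum_(i < n) c i * F i = sumn [seq c i * F i | i <- iota 0 n])%N.
Proof. by rewrite sumnE big_map -(big_mkord xpredT (fun i => c i * F i)) /index_iota subn0. Qed.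

Lemma Hzs2 v : size v = size X2 -> zero_sum (mk X2 v) <-> zsb2 v.
Proof.
move=> _; rewrite zs_mk size_X2.
set S := (\sum_(j < 8) _)%R.
have hS : forall t : 'I_5, S 0%R t =
    ((\sum_(j < 8) nth 0 (nth [::] table j) t * nth 0 v j)%N%:R : 'Z_2)%R.
  move=> t; rewrite /S summxE natr_sum; apply: eq_bigr => j _.
  rewrite mulmxnE (nth_map [::]) ?size_X2 // mxE.
  by rewrite natrM mulr_natr.
have e : forall N : nat, (N%:R : 'Z_2)%R = 0%R <-> N %% 2 = 0.
  move=> N; split => [h|h].
    by have := f_equal (@nat_of_ord _) h; rewrite val_Zp_nat.
  by apply: val_inj; rewrite /= val_Zp_nat.
split.
- move=> h0; apply/allP => t; rewrite mem_iota add0n => /andP[_ ht].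
  have := hS (Ordinal ht); rewrite h0 mxE => /esym /e.
  rewrite (sum_iota2 (fun j => nth 0 (nth [::] table j) (Ordinal ht)) (fun j => nth 0 v j)) modn2.
  by case: odd.
- move=> /allP h; apply/rowP => t; rewrite hS mxE; apply/e.
  have := h t; rewrite mem_iota add0n ltn_ord => /(_ isT).
  by rewrite (sum_iota2 (fun j => nth 0 (nth [::] table j) t) (fun j => nth 0 v j)) modn2; case: odd.
Qed.

Definition atl2 : seq (seq nat) :=
 [:: [::1;0;0;0;0;0;0;0]; [::0;2;0;0;0;0;0;0]; [::0;0;2;0;0;0;0;0]; [::0;0;0;2;0;0;0;0];
     [::0;0;0;0;2;0;0;0]; [::0;0;0;0;0;2;0;0]; [::0;0;0;0;0;0;2;0]; [::0;0;0;0;0;0;0;2];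
     [::0;1;1;1;1;1;1;0]; [::0;0;1;1;0;0;0;1]; [::0;1;0;0;1;1;1;1]].
Definition bs2 : seq nat := [:: 1;2;2;2;2;2;2;2].


Lemma chk2 : chk zsb2 atl2 bs2. Proof. by vm_compute. Qed.
Lemma okbs2 : okbs X2 zsb2 bs2. Proof. by rewrite /okbs size_X2; vm_compute. Qed.
Lemma atl2_ok : all (fun a => (size a == 8) && zsb2 a && (0 < sumn a) && ~~ psubv zsb2 a) atl2.
Proof. by vm_compute. Qed.


Definition cB (z k : nat) : seq nat := [:: z; k; k.+1; k.+1; k; k; k; 1].
Definition B2 z k : fseq G2 := mk X2 (cB z k).

Lemma atom_atl2 a : a \in atl2 -> atom (mk X2 a).
Proof.
move=> ha; have := allP atl2_ok a ha => /andP[/andP[/andP[/eqP h1 h2] h3] h4].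
by apply: (atom_chk uniq_X2 Hzs2).
Qed.

Lemma fwd2 z k (s : seq (fseq G2)) : (forall A, A \in s -> atom A) -> B2 z k = seq_prod s ->
  exists t, (size s = z + k + 1 + 4 * t /\ 2 * t <= k) \/
            (size s = z + k + 2 + 4 * t /\ 2 * t + 1 <= k).
Proof.
move=> hs eB.
have hB : forall g, g \notin X2 -> B2 z k g = 0 by move=> g hg; rewrite /B2 mk_out.
have [c [h1 h2]] := fact_counts uniq_X2 Hzs2 chk2 okbs2 hB hs eB.
have E : forall j, j < 8 -> nth 0 (cB z k) j = sumn [seq c i * nth 0 (nth [::] atl2 i) j | i <- iota 0 11].
  move=> j hj; rewrite -(sum_iota2 c (fun i => nth 0 (nth [::] atl2 i) j)) -h2; last by rewrite size_X2.
  by rewrite /B2 (mk_nth uniq_X2) ?size_X2.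
have e0 := E 0 isT; have e1 := E 1 isT; have e2 := E 2 isT; have e3 := E 3 isT;
have e4 := E 4 isT; have e5 := E 5 isT; have e6 := E 6 isT; have e7 := E 7 isT.
have hsz : size s = sumn [seq c i * 1 | i <- iota 0 11].
  by rewrite -(sum_iota2 c (fun _ => 1)) h1; apply: eq_bigr => i _; rewrite muln1.
clear E h2 h1 hs eB hB.
simpl in *.
exists (c 1); lia.
Qed.

Definition a_ i := nth [::] atl2 i.

Lemma bwd_gen z k (vs : seq (seq nat)) :
  all (fun a => a \in atl2) vs ->
  [seq sumn [seq nth 0 a j | a <- vs] | j <- iota 0 8] = cB z k ->
  in_lengths (B2 z k) (size vs).
Proof.
move=> hall hsum; exists [seq mk X2 a | a <- vs]; split.
- by rewrite size_map.
- move=> A /mapP [a ha ->]; apply: atom_atl2; exact: (allP hall).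
- by rewrite prod_map_mk size_X2 hsum.
Qed.

Lemma bwd1 z k t : 2 * t <= k -> in_lengths (B2 z k) (z + k + 1 + 4 * t).
Proof.
move=> hk.
pose vs := nseq z (a_ 0) ++ nseq (k - 2 * t) (a_ 8) ++ [:: a_ 9] ++ nseq t (a_ 1) ++
   nseq t (a_ 2) ++ nseq t (a_ 3) ++ nseq t (a_ 4) ++ nseq t (a_ 5) ++ nseq t (a_ 6).
have -> : z + k + 1 + 4 * t = size vs.
  rewrite /vs !size_cat !size_nseq /=; lia.
apply: bwd_gen.
  by rewrite /vs !all_cat !all_nseq /= !orbT.
rewrite /vs /=; do 5 rewrite ?map_cat ?sumn_cat ?map_nseq ?sumn_nseq /=.
rewrite /cB; repeat f_equal; lia.
Qed.

Lemma bwd2 z k t : 2 * t + 1 <= k -> in_lengths (B2 z k) (z + k + 2 + 4 * t).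
Proof.
move=> hk.
pose vs := nseq z (a_ 0) ++ nseq (k - 2 * t - 1) (a_ 8) ++ [:: a_ 10] ++ nseq t (a_ 1) ++
   nseq t.+1 (a_ 2) ++ nseq t.+1 (a_ 3) ++ nseq t (a_ 4) ++ nseq t (a_ 5) ++ nseq t (a_ 6).
have -> : z + k + 2 + 4 * t = size vs.
  rewrite /vs !size_cat !size_nseq /=; lia.
apply: bwd_gen.
  by rewrite /vs !all_cat !all_nseq /= !orbT.
rewrite /vs /=; do 5 rewrite ?map_cat ?sumn_cat ?map_nseq ?sumn_nseq /=.
rewrite /cB; repeat f_equal; lia.
Qed.


Section G0.
Variable G : finZmodType.

Lemma zero_sum_prod (s : seq (fseq G)) : (forall A, A \in s -> atom A) -> zero_sum (seq_prod s).
Proof.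
elim: s => [|A s IH] hs.
  by rewrite /zero_sum big1 // => g _; rewrite ffunE big_nil.
have -> : seq_prod (A :: s) = seq_mul A (seq_prod s).
  by apply/ffunP => g; rewrite !ffunE big_cons.
rewrite /zero_sum sigma_mul.
have [zA _] := hs A (mem_head _ _).
rewrite zA add0r; apply: IH => B hB; apply: hs; by rewrite inE hB orbT.
Qed.

Lemma in_lengths_zs (B : fseq G) x : in_lengths B x -> zero_sum B.
Proof. by case=> s [_ hs ->]; apply: zero_sum_prod. Qed.

Lemma in_lengths0 (B : fseq G) k : in_lengths B 0 -> in_lengths B k -> k = 0.
Proof.
case=> s0 [/size0nil -> _ e0] [s [<- hs e]].
case: s hs e => [//|A s] hs e.
have [_ [lA _]] := hs A (mem_head _ _).
exfalso; move: lA; rewrite /seq_len lt0n => /eqP; apply.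
apply: big1 => g _; apply/eqP; rewrite -leqn0.
have := prod_ge g (mem_head A s); rewrite -e e0 ffunE big_nil; by [].
Qed.

Lemma in_lengths_nil : in_lengths (seq_prod (@nil (fseq G))) 0.
Proof. by exists [::]. Qed.

End G0.

Theorem proposition3p6 :
  forall L : nat -> Prop,
    in_system_of_sets [the finZmodType of 'Z_6] L ->
    is_AMP 4 (pred3 0 1 4)%N L ->
    in_system_of_sets [the finZmodType of 'rV['Z_2]_5] L.
Proof.
move=> L [B [zB hL]] [_ _ _ _ [m [M [Lm LM Lb Lc]]]].
have hmM : m <= M by have /andP[] := Lb M LM.
have [m0|mpos] := posnP m.
  subst m.
  have hM0 : M = 0 by apply: (in_lengths0 (proj1 (hL 0) Lm) (proj1 (hL M) LM)).
  subst M.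
  exists (seq_prod (@nil (fseq [the finZmodType of 'rV['Z_2]_5]))); split.
    by apply: (in_lengths_zs (in_lengths_nil _)).
  move=> k; split => [Lk|hk].
    have /andP[_ ] := Lb k Lk; rewrite leqn0 => /eqP ->; exact: in_lengths_nil.
  by rewrite (in_lengths0 (in_lengths_nil _) hk).
have hM3 : M = m \/ M.+1 < 3 * m.
  case: (ltngtP m M) => [hlt||->]; last by left.
  - right.
    have Lm1 : L m.+1.
      apply/Lc; split; first by apply/andP; split.
      by exists 1 => //; rewrite addn1.
    have [s1 [l1 a1 e1]] := proj1 (hL m) Lm.
    have [s2 [l2 a2 e2]] := proj1 (hL m.+1) Lm1.
    have [s3 [l3 a3 e3]] := proj1 (hL M) LM.
    rewrite ltnNge; apply/negP => h.
    apply: (no_bad6 a1 e1 a2 e2 a3 e3); rewrite ?l1 ?l2 ?l3 //.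
  - by move=> h; exfalso; move: hmM; rewrite leqNgt h.
have [_ [dM hdM eM]] := proj1 (Lc M) LM.
have hdM' : dM = 0 \/ dM = 1 \/ dM = 4.
  by move: hdM; rewrite !inE => /or3P[] /eqP ->; auto.
set k := (M - m + 1) %/ 2.
set z := m - k - 1.
have hk : z + k + 1 = m by rewrite /z /k; lia.
exists (B2 z k); split.
  by apply: (in_lengths_zs (bwd1 z (t := 0) (leq0n k))).
move=> x; split.
- move=> Lx; have [/andP[hx1 hx2] [d hd ex]] := proj1 (Lc x) Lx.
  have hd' : d = 0 \/ d = 1 \/ d = 4.
    by move: hd; rewrite !inE => /or3P[] /eqP ->; auto.
  have [h0|h1] : (x - m) %% 4 = 0 \/ (x - m) %% 4 = 1 by lia.
  + have hb : 2 * ((x - m) %/ 4) <= k by rewrite /k; lia.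
    have := bwd1 z hb.
    by have -> : z + k + 1 + 4 * ((x - m) %/ 4) = x by lia.
  + have hb : 2 * ((x - m) %/ 4) + 1 <= k by rewrite /k; lia.
    have := bwd2 z hb.
    by have -> : z + k + 2 + 4 * ((x - m) %/ 4) = x by lia.
- case=> s [hs ha he].
  have [t [[e1 e2]|[e1 e2]]] := fwd2 ha he; rewrite hs in e1.
  + apply/Lc; split; first by apply/andP; split; rewrite /k in e2; lia.
    exists 0; first by []. lia.
  + apply/Lc; split; first by apply/andP; split; rewrite /k in e2; lia.
    exists 1; first by []. lia.
Qed.
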